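(* Let $f\in\mathbb{R}[X_1,\dots,X_n]$ be a form (homogeneous polynomial) of degree $2d$. Suppose there exist nonnegative real numbers $a_{\alpha,i}$, for $\alpha\in\Delta$ and $i=1,\dots,n$, such that, writing $a_\alpha:=(a_{\alpha,1},\dots,a_{\alpha,n})$, (1) for every $\alpha\in\Delta$: $(2d)^{2d}a_{\alpha}^{\alpha}=f_{\alpha}^{2d}\alpha^{\alpha}$; and (2) $f_{2d,i}\ge\sum_{\alpha\in\Delta}a_{\alpha,i}$ for $i=1,\dots,n$. Then $f$ is SOBS.
   Context: $\mathbb{N}=\{0,1,2,\dots\}$, $n\ge1$, $\underline{X}=(X_1,\dots,X_n)$. For $\alpha\in\mathbb{N}^n$ write $\underline{X}^\alpha=X_1^{\alpha_1}\cdots X_n^{\alpha_n}$, $|\alpha|=\alpha_1+\cdots+\alpha_n$, and for $a=(a_1,\dots,a_n)\in\mathbb{R}^n$ write $a^\alpha=\prod_{i=1}^n a_i^{\alpha_i}$ with the convention $0^0=1$ (so $\alpha^\alpha=\prod_i\alpha_i^{\alpha_i}$). For $f=\sum_\alpha f_\alpha\underline{X}^\alpha$ of degree $2d$, let $\epsilon_i$ be the $i$-th standard unit vector, $f_{2d,i}:=f_{2d\epsilon_i}$ (the coefficient of $X_i^{2d}$), $\Omega=\{\alpha\in\mathbb{N}^n: f_\alpha\ne0\}\setminus\{\underline{0},2d\epsilon_1,\dots,2d\epsilon_n\}$, and $\Delta=\{\alpha\in\Omega:\ f_\alpha<0\text{ or }\alpha_i\text{ is odd for some }i\}$ (the $\alpha\in\Omega$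 for which $f_\alpha\underline{X}^\alpha$ is not a square). A polynomial is SOBS (a sum of binomial squares) if it is a finite sum of squares of polynomials of the form $a\underline{X}^\alpha-b\underline{X}^\beta$ with $a,b\in\mathbb{R}$, $\alpha,\beta\in\mathbb{N}^n$. *)

(* Defs.v *)
From HB Require Import structures.
From mathcomp Require Import all_boot all_order all_algebra.
From mathcomp Require Import reals.
From mathcomp.multinomials Require Import mpoly.
Set Implicit Arguments. Unset Strict Implicit. Unset Printing Implicit Defensive.
Import Order.TTheory GRing.Theory Num.Theory.
Local Open Scope ring_scope.

Section Defs.
Variables (R : realType) (n : nat).

Definition mnm_pow (i : 'I_n) (k : nat) : 'X_{1..n} :=
  [multinom (if j == i then k else 0%N) | j < n].

(** a^alpha = prod_i a_i^(alpha_i)  (with 0^0 = 1, as for [^+]). *)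
Definition vpow (a : 'I_n -> R) (alpha : 'X_{1..n}) : R :=
  \prod_(i < n) a i ^+ alpha i.

(** alpha^alpha = prod_i alpha_i^(alpha_i)  (with 0^0 = 1). *)
Definition mnm_selfpow (alpha : 'X_{1..n}) : R :=
  \prod_(i < n) (alpha i)%:R ^+ alpha i.

Definition in_Omega (f : {mpoly R[n]}) (d : nat) (alpha : 'X_{1..n}) : bool :=
  [&& f@_alpha != 0, alpha != 0%MM & [forall i, alpha != mnm_pow i (2 * d)]].

(** Delta: those alpha in Omega with f_alpha < 0 or some alpha_i odd.
    Given as the (duplicate-free) sublist of the support of f. *)
Definition Delta (f : {mpoly R[n]}) (d : nat) : seq 'X_{1..n} :=
  [seq alpha <- msupp f | in_Omega f d alpha &&
     ((f@_alpha < 0) || [exists i, odd (alpha i)])].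

Definition SOBS (p : {mpoly R[n]}) : Prop :=
  exists s : seq (R * R * 'X_{1..n} * 'X_{1..n}),
    p = \sum_(t <- s) (t.1.1.1 *: 'X_[t.1.2] - t.1.1.2 *: 'X_[t.2]) ^+ 2.

End Defs.

(* Main.v *)
Require Import Defs.
From HB Require Import structures.
From mathcomp Require Import all_boot all_order all_algebra.
From mathcomp Require Import reals.
From mathcomp.multinomials Require Import mpoly.
From mathcomp Require Import ring lra zify.
Set Implicit Arguments. Unset Strict Implicit. Unset Printing Implicit Defensive.
Import Order.TTheory GRing.Theory Num.Theory.
Local Open Scope ring_scope.

Section S.
Variables (R : realType) (n : nat).
Local Notation P := {mpoly R[n]}.

Definition term (p : P) : Prop := exists (c : R) (u : 'X_{1..n}), p = c *: 'X_[u].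

Lemma termX u : term 'X_[u]. Proof. by exists 1, u; rewrite scale1r. Qed.
Lemma term1 : term 1. Proof. by exists 1, 0%MM; rewrite scale1r mpolyX0. Qed.
Lemma termZ c p : term p -> term (c *: p).
Proof. by case=> e [u ->]; exists (c * e), u; rewrite scalerA. Qed.
Lemma termM p q : term p -> term q -> term (p * q).
Proof.
case=> e [u ->] [e' [u' ->]]; exists (e * e'), (u + u')%MM.
by rewrite -scalerAl -scalerAr scalerA mpolyXD.
Qed.
Lemma termXn p k : term p -> term (p ^+ k).
Proof. move=> tp; elim: k => [|k IH]; first by rewrite expr0; exact: term1.
by rewrite exprS; apply: termM. Qed.
Lemma term_prod (I : Type) (r : seq I) (Pr : pred I) (F : I -> P) :
  (forall i, term (F i)) -> term (\prod_(i <- r | Pr i) F i).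
Proof. by move=> h; apply: big_ind => //; [exact: term1 | exact: termM]. Qed.

Definition SOBS' (p : P) := SOBS p.

Lemma SOBS0 : SOBS (0 : P). Proof. by exists [::]; rewrite big_nil. Qed.
Lemma SOBSD p q : SOBS p -> SOBS q -> SOBS (p + q :> P).
Proof. by case=> s -> [t ->]; exists (s ++ t); rewrite big_cat. Qed.
Lemma SOBS_sum (I : Type) (r : seq I) (Pr : pred I) (F : I -> P) :
  (forall i, Pr i -> SOBS (F i)) -> SOBS (\sum_(i <- r | Pr i) F i).
Proof. by move=> h; apply: big_ind => //; [exact: SOBS0 | exact: SOBSD]. Qed.
Lemma SOBSMn p k : SOBS p -> SOBS (p *+ k :> P).
Proof. move=> sp; elim: k => [|k IH]; first by rewrite mulr0n; exact: SOBS0.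
by rewrite mulrS; apply: SOBSD. Qed.
Lemma SOBS_bin a b u v : SOBS ((a *: 'X_[u] - b *: 'X_[v]) ^+ 2 : P).
Proof. by exists [:: (a, b, u, v)]; rewrite big_seq1. Qed.
Lemma SOBS_sqt p q : term p -> term q -> SOBS ((p - q) ^+ 2).
Proof. by case=> a [u ->] [b [v ->]]; apply: SOBS_bin. Qed.
Lemma SOBSZ c p : 0 <= c -> SOBS p -> SOBS (c *: p :> P).
Proof.
move=> c0 [s ->]; exists [seq (Num.sqrt c * t.1.1.1, Num.sqrt c * t.1.1.2, t.1.2, t.2) | t <- s].
rewrite big_map scaler_sumr; apply: eq_bigr => t _ /=.
rewrite -[c in LHS](sqr_sqrtr c0) -exprZn scalerBr !scalerA //.
Qed.
Lemma SOBS_mulsq p r : term r -> SOBS p -> SOBS (p * r ^+ 2).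
Proof.
case=> e [w ->] [s ->].
exists [seq (t.1.1.1 * e, t.1.1.2 * e, (t.1.2 + w)%MM, (t.2 + w)%MM) | t <- s].
rewrite big_map mulr_suml; apply: eq_bigr => t _ /=.
rewrite -exprMn mulrBl -!scalerAl -!scalerAr !scalerA -!mpolyXD //.
Qed.
Lemma SOBS_sqmono c h : 0 <= c -> SOBS (c *: 'X_[h + h] : P).
Proof.
move=> c0; have := SOBS_bin (Num.sqrt c) 0 h h.
by rewrite scale0r subr0 exprZn sqr_sqrtr // expr2 -mpolyXD.
Qed.

Definition Ef (Y Z : P) (S c : nat) := (Y ^+ c * Z ^+ (S - c)) ^+ 2.
Definition Df Y Z S c := Ef Y Z S c.+1 - Ef Y Z S c.

Lemma Tstep Y Z S c : term Y -> term Z -> (c.+2 <= S)%N ->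
  SOBS (Df Y Z S c.+1 - Df Y Z S c).
Proof.
move=> tY tZ /subnK <-; set k := (S - c.+2)%N.
rewrite /Df /Ef.
have -> : (k + c.+2 - c.+2 = k)%N by lia.
have -> : (k + c.+2 - c.+1 = k.+1)%N by lia.
have -> : (k + c.+2 - c = k.+2)%N by lia.
have E : (Y ^+ c.+2 * Z ^+ k) ^+ 2 - (Y ^+ c.+1 * Z ^+ k.+1) ^+ 2 -
   ((Y ^+ c.+1 * Z ^+ k.+1) ^+ 2 - (Y ^+ c * Z ^+ k.+2) ^+ 2) =
   (Y ^+ c.+2 * Z ^+ k - Y ^+ c * Z ^+ k.+2) ^+ 2.
  rewrite !exprS; ring.
rewrite E; apply: SOBS_sqt; apply: termM; apply: termXn => //.
Qed.

Lemma Dmono Y Z S c k : term Y -> term Z -> ((c + k).+1 <= S)%N ->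
  SOBS (Df Y Z S (c + k) - Df Y Z S c).
Proof.
move=> tY tZ; elim: k => [|k IH] hS; first by rewrite addn0 subrr; exact: SOBS0.
have -> : Df Y Z S (c + k.+1) - Df Y Z S c =
  (Df Y Z S (c + k).+1 - Df Y Z S (c + k)) + (Df Y Z S (c + k) - Df Y Z S c).
  by rewrite addnS; ring.
apply: SOBSD; first by apply: Tstep => //; rewrite -addnS.
by apply: IH; apply: leq_trans hS; rewrite ltnS addnS.
Qed.

Lemma twoV Y Z S p : term Y -> term Z -> (p <= S)%N ->
  SOBS (Ef Y Z S S *+ p + Ef Y Z S 0 *+ (S - p) - Ef Y Z S p *+ S).
Proof.
move=> tY tZ pS.
have [->|p0] := posnP p; first by rewrite subn0 mulr0n add0r subrr; exact: SOBS0.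
have [eS|pS'] := eqVneq p S; first by rewrite eS subnn mulr0n addr0 subrr; exact: SOBS0.
have ltpS : (p < S)%N by rewrite ltn_neqAle pS' pS.
set q := p.-1.
have hq : p = q.+1 by rewrite prednK.
set A := \sum_(0 <= c < p) (Df Y Z S q - Df Y Z S c).
set B := \sum_(p <= c < S) (Df Y Z S c - Df Y Z S q).
have sA : SOBS A.
  rewrite /A big_seq; apply: SOBS_sum => c; rewrite mem_index_iota => /andP [_ cp].
  have := @Dmono Y Z S c (q - c) tY tZ; rewrite subnKC; last by rewrite -ltnS -hq.
  by apply; rewrite -hq.
have sB : SOBS B.
  rewrite /B big_seq; apply: SOBS_sum => c; rewrite mem_index_iota => /andP [pc cS].
  have := @Dmono Y Z S q (c - q) tY tZ; rewrite subnKC; last by lia.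
  by apply.
have eA : A = Df Y Z S q *+ p - (Ef Y Z S p - Ef Y Z S 0).
  by rewrite /A sumrB sumr_const_nat subn0 telescope_sumr.
have eB : B = (Ef Y Z S S - Ef Y Z S p) - Df Y Z S q *+ (S - p).
  by rewrite /B sumrB sumr_const_nat telescope_sumr // ltnW.
have -> : Ef Y Z S S *+ p + Ef Y Z S 0 *+ (S - p) - Ef Y Z S p *+ S =
   A *+ (S - p) + B *+ p.
  rewrite eA eB; move: (subnK (ltnW ltpS)); set r := (S - p)%N => <-.
  rewrite mulrnDr; ring.
by apply: SOBSD; apply: SOBSMn.
Qed.

Lemma big2 (T : Type) (idx : T) (op : Monoid.com_law idx) (F : 'I_n -> T) (i j : 'I_n) :
  i != j -> \big[op/idx]_k F k = op (op (F i) (F j)) (\big[op/idx]_(k | (k != i) && (k != j)) F k).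
Proof.
move=> ij; rewrite (bigD1 i) //= (bigD1 j) //=; last by rewrite eq_sym.
by rewrite Monoid.mulmA.
Qed.

Definition Tf (Y : 'I_n -> P) (b : 'I_n -> nat) :=
  \sum_i (Y i ^+ 2) ^+ (\sum_j b j) *+ b i - (\prod_i (Y i ^+ 2) ^+ b i) *+ (\sum_j b j).

Lemma Tf_single Y b k : (forall i, i != k -> b i = 0%N) -> Tf Y b = 0.
Proof.
move=> hk; rewrite /Tf.
have hm : (\sum_j b j = b k)%N by rewrite (bigD1 k) //= big1 ?addn0 // => i /hk.
rewrite hm (bigD1 k) //= big1 ?addr0 => [|i /hk ->]; last by rewrite mulr0n.
rewrite (bigD1 k) //= big1 ?mulr1 => [|i /hk ->]; last by rewrite expr0.
by rewrite subrr.
Qed.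

Lemma Tf_small Y b : (#|[set i | b i != 0%N]| <= 1)%N -> Tf Y b = 0.
Proof.
rewrite leq_eqVlt ltnS leqn0 => /orP [/cards1P [k hk]|].
  apply: (@Tf_single _ _ k) => i ik; apply/eqP; apply/negPn/negP => bi.
  have : i \in [set i | b i != 0%N] by rewrite inE.
  by rewrite hk inE (negbTE ik).
rewrite cards_eq0 => /eqP h0.
have hb : forall i, b i = 0%N.
  move=> i; apply/eqP; apply/negPn/negP => bi.
  have : i \in [set i | b i != 0%N] by rewrite inE.
  by rewrite h0 inE.
have hm : (\sum_j b j = 0)%N by rewrite big1.
rewrite /Tf hm mulr0n subr0.
by rewrite big1 // => i _; rewrite hb mulr0n.
Qed.

Lemma L3 Y b : (forall i, term (Y i)) -> SOBS (Tf Y b).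
Proof.
move=> hY.
suff H : forall N b, (#|[set i | b i != 0%N]| <= N)%N -> SOBS (Tf Y b) by exact: H.
elim=> [|N IH] {}b hN.
  by rewrite Tf_small; [exact: SOBS0 | apply: leq_trans hN _].
have [le1|gt1] := leqP #|[set i | b i != 0%N]| 1.
  by rewrite Tf_small //; exact: SOBS0.
set supp := [set i | b i != 0%N] in hN gt1.
have [i iS] : exists i, i \in supp by apply/card_gt0P; apply: leq_trans gt1.
have [j jS] : exists j, j \in supp :\ i.
  by apply/card_gt0P; move: gt1; rewrite (cardsD1 i) iS.
have ji : j != i by move: jS; rewrite !inE => /andP [].
have ij : i != j by rewrite eq_sym.
have bi0 : b i != 0%N by move: iS; rewrite inE.
have bj0 : b j != 0%N by move: jS; rewrite !inE => /andP [].
set S := (b i + b j)%N.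
pose b1 := fun k => if k == j then 0%N else if k == i then S else b k.
pose b2 := fun k => if k == i then 0%N else if k == j then S else b k.
have Sb1 : [set k | b1 k != 0%N] = supp :\ j.
  apply/setP => k; rewrite !inE /b1; case: (eqVneq k j) => //= _.
  by case: (eqVneq k i) => // ->; rewrite /S addn_eq0 (negbTE bi0).
have Sb2 : [set k | b2 k != 0%N] = supp :\ i.
  apply/setP => k; rewrite !inE /b2; case: (eqVneq k i) => //= _.
  by case: (eqVneq k j) => // ->; rewrite /S addn_eq0 (negbTE bi0).
have c1 : (#|[set k | b1 k != 0%N]| <= N)%N.
  have jS' : j \in supp by move: jS; rewrite inE => /andP [].
  by rewrite Sb1; move: hN; rewrite (cardsD1 j supp) jS' add1n ltnS.
have c2 : (#|[set k | b2 k != 0%N]| <= N)%N.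
  by rewrite Sb2; move: hN; rewrite (cardsD1 i supp) iS add1n ltnS.
have s1 := IH _ c1; have s2 := IH _ c2.
pose Rt := \prod_(k | (k != i) && (k != j)) Y k ^+ b k.
have tRt : term Rt by apply: term_prod => k; apply: termXn.
have sV := SOBS_mulsq tRt (@twoV (Y i) (Y j) S (b i) (hY i) (hY j) (leq_addr _ _)).
set m := (\sum_k b k)%N.
have hm1 : (\sum_k b1 k = m)%N.
  rewrite /m (@big2 _ _ _ b1 _ _ ij) (@big2 _ _ _ b _ _ ij) /b1 /= ?eqxx ?(negbTE ij) ?(negbTE ji) ?addn0 ?add0n /S.
  congr (_ + _)%N; apply: eq_bigr => k /andP [/negbTE -> /negbTE ->] //.
have hm2 : (\sum_k b2 k = m)%N.
  rewrite /m (@big2 _ _ _ b2 _ _ ij) (@big2 _ _ _ b _ _ ij) /b2 /= ?eqxx ?(negbTE ij) ?(negbTE ji) ?addn0 ?add0n /S.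
  congr (_ + _)%N; apply: eq_bigr => k /andP [/negbTE -> /negbTE ->] //.
set Rest := \sum_(k | (k != i) && (k != j)) (Y k ^+ 2) ^+ m *+ b k.
have e0 : \sum_k (Y k ^+ 2) ^+ m *+ b k = (Y i ^+ 2) ^+ m *+ b i + (Y j ^+ 2) ^+ m *+ b j + Rest.
  by rewrite (@big2 _ _ _ _ _ _ ij).
have e1 : \sum_k (Y k ^+ 2) ^+ m *+ b1 k = (Y i ^+ 2) ^+ m *+ S + (Y j ^+ 2) ^+ m *+ 0 + Rest.
  rewrite (@big2 _ _ _ _ _ _ ij) /b1 /= ?eqxx ?(negbTE ij) ?(negbTE ji); congr (_ + _).
  by apply: eq_bigr => k /andP [/negbTE -> /negbTE ->].
have e2 : \sum_k (Y k ^+ 2) ^+ m *+ b2 k = (Y i ^+ 2) ^+ m *+ 0 + (Y j ^+ 2) ^+ m *+ S + Rest.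
  rewrite (@big2 _ _ _ _ _ _ ij) /b2 /= ?eqxx ?(negbTE ij) ?(negbTE ji); congr (_ + _).
  by apply: eq_bigr => k /andP [/negbTE -> /negbTE ->].
have eR : \prod_(k | (k != i) && (k != j)) (Y k ^+ 2) ^+ b k = Rt ^+ 2.
  by rewrite /Rt -prodrXl; apply: eq_bigr => k _; rewrite exprAC.
have p0 : \prod_k (Y k ^+ 2) ^+ b k = (Y i ^+ b i) ^+ 2 * (Y j ^+ b j) ^+ 2 * Rt ^+ 2.
  by rewrite (@big2 _ _ _ _ _ _ ij) /= eR !(exprAC _ 2).
have p1 : \prod_k (Y k ^+ 2) ^+ b1 k = (Y i ^+ S) ^+ 2 * 1 * Rt ^+ 2.
  rewrite (@big2 _ _ _ _ _ _ ij) /b1 /= ?eqxx ?(negbTE ij) ?(negbTE ji) expr0 (exprAC _ 2).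
  by rewrite -eR; congr (_ * _); apply: eq_bigr => k /andP [/negbTE -> /negbTE ->].
have p2 : \prod_k (Y k ^+ 2) ^+ b2 k = 1 * (Y j ^+ S) ^+ 2 * Rt ^+ 2.
  rewrite (@big2 _ _ _ _ _ _ ij) /b2 /= ?eqxx ?(negbTE ij) ?(negbTE ji) expr0 (exprAC _ 2).
  by rewrite -eR; congr (_ * _); apply: eq_bigr => k /andP [/negbTE -> /negbTE ->].
have hSi : (S - b i = b j)%N by rewrite /S addKn.
move: sV; rewrite /Ef subnn subn0 hSi !expr0 mulr1 mul1r => sV.
have key : Tf Y b *+ S = Tf Y b1 *+ b i + Tf Y b2 *+ b j +
  (((Y i ^+ S) ^+ 2 *+ b i + (Y j ^+ S) ^+ 2 *+ b j - (Y i ^+ b i * Y j ^+ b j) ^+ 2 *+ S) * Rt ^+ 2) *+ m.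
  rewrite /Tf hm1 hm2 -/m e0 e1 e2 p0 p1 p2 /S; ring.
have sS : SOBS (Tf Y b *+ S).
  by rewrite key; apply: SOBSD; [apply: SOBSD|]; apply: SOBSMn.
have S0 : (S%:R : R) != 0 by rewrite pnatr_eq0 /S addn_eq0 negb_and bi0.
have -> : Tf Y b = (S%:R)^-1 *: (Tf Y b *+ S) by rewrite -scaler_nat scalerA mulVf // scale1r.
by apply: SOBSZ => //; rewrite invr_ge0 ler0n.
Qed.

Lemma split_nat (b : 'I_n -> nat) k : (k <= \sum_i b i)%N ->
  exists g : 'I_n -> nat, (forall i, g i <= b i)%N /\ (\sum_i g i)%N = k.
Proof.
elim: k => [|k IH] hk.
  by exists (fun _ => 0%N); split=> //; rewrite big1.
have [g [gb sg]] := IH (ltnW hk).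
case: (pickP (fun i => g i < b i)%N) => [i /= gi|none].
  exists (fun l => if l == i then (g i).+1 else g l); split.
    by move=> l; case: eqP => [->|]; [exact: gi | move=> _; exact: gb].
  rewrite (bigD1 i) //= eqxx -sg (bigD1 i (P := predT)) //= addSn; congr (_.+1)%N.
  congr (_ + _)%N; apply: eq_bigr => l /negbTE -> //.
have : (\sum_i b i <= \sum_i g i)%N.
  by apply: leq_sum => i _; move: (none i) => /= /negbT; rewrite -leqNgt.
by rewrite sg leqNgt hk.
Qed.

Lemma L4 (Y : 'I_n -> P) (al : 'I_n -> nat) d : (forall i, term (Y i)) ->
  (\sum_i al i)%N = (2 * d)%N ->
  SOBS (\sum_i Y i ^+ (2 * d) *+ al i - (\prod_i Y i ^+ al i) *+ (2 * d)).
Proof.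
move=> hY hs.
have [g [ga sg]] : exists g : 'I_n -> nat, (forall i, g i <= al i)%N /\ (\sum_i g i)%N = d.
  by apply: split_nat; rewrite hs; lia.
pose g' := fun i => (al i - g i)%N.
have hal : forall i, al i = (g i + g' i)%N by move=> i; rewrite /g' subnKC.
have sg' : (\sum_i g' i)%N = d.
  have : (\sum_i al i)%N = (\sum_i g i + \sum_i g' i)%N.
    by rewrite -big_split; apply: eq_bigr => i _; rewrite hal.
  rewrite hs sg; lia.
have s1 := L3 g hY; have s2 := L3 g' hY.
have t1 : term (\prod_i Y i ^+ g i) by apply: term_prod => i; apply: termXn.
have t2 : term (\prod_i Y i ^+ g' i) by apply: term_prod => i; apply: termXn.
have s3 := SOBS_sqt t1 t2.
have -> : \sum_i Y i ^+ (2 * d) *+ al i - (\prod_i Y i ^+ al i) *+ (2 * d) =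
   Tf Y g + Tf Y g' + ((\prod_i Y i ^+ g i) - (\prod_i Y i ^+ g' i)) ^+ 2 *+ d.
  rewrite /Tf sg sg'.
  have -> : \sum_i Y i ^+ (2 * d) *+ al i =
     \sum_i (Y i ^+ 2) ^+ d *+ g i + \sum_i (Y i ^+ 2) ^+ d *+ g' i.
    by rewrite -big_split; apply: eq_bigr => i _; rewrite hal mulrnDr -exprM.
  have -> : \prod_i Y i ^+ al i = (\prod_i Y i ^+ g i) * (\prod_i Y i ^+ g' i).
    by rewrite -big_split; apply: eq_bigr => i _; rewrite hal exprD.
  have -> : \prod_i (Y i ^+ 2) ^+ g i = (\prod_i Y i ^+ g i) ^+ 2.
    by rewrite -prodrXl; apply: eq_bigr => i _; rewrite exprAC.
  have -> : \prod_i (Y i ^+ 2) ^+ g' i = (\prod_i Y i ^+ g' i) ^+ 2.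
    by rewrite -prodrXl; apply: eq_bigr => i _; rewrite exprAC.
  ring.
by apply: SOBSD; [apply: SOBSD|apply: SOBSMn].
Qed.

Lemma rootex (x : R) k : 0 <= x -> (0 < k)%N -> exists y, 0 <= y /\ y ^+ k = x.
Proof.
move=> x0 k0.
have [||y /andP [y0 _] ry] := @poly_ivt R ('X^k - x%:P) 0 (1 + x).
- by rewrite addr_ge0.
- rewrite !hornerE expr0n -(prednK k0) /= sub0r oppr_le0 x0 /= subr_ge0.
  rewrite prednK // (le_trans _ (ler_eXnr _ _)) //.
  + by rewrite lerDr.
  + by rewrite lerDl.
- exists y; split=> //; move: ry; rewrite /root !hornerE subr_eq0 => /eqP.
  by [].
Qed.

Lemma mnm_powE (i : 'I_n) k : 'X_[mnm_pow i k] = ('X_i : P) ^+ k.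
Proof.
rewrite mpolyXn; congr 'X_[_]; apply/mnmP => j.
by rewrite mulmnE mnm1E mnmE eq_sym; case: eqP => _; rewrite ?mul1n ?mul0n.
Qed.

Lemma mnm_pow_add (i : 'I_n) k l : mnm_pow i (k + l) = (mnm_pow i k + mnm_pow i l)%MM.
Proof. by apply/mnmP => j; rewrite mnmDE !mnmE; case: eqP. Qed.

Lemma LK (d : nat) (al : 'X_{1..n}) (c : R) (a : 'I_n -> R) :
  (0 < d)%N -> mdeg al = (2 * d)%N -> c != 0 -> (forall i, 0 <= a i) ->
  (2 * d)%:R ^+ (2 * d) * vpow a al = c ^+ (2 * d) * mnm_selfpow R al ->
  SOBS (c *: 'X_[al] + \sum_i a i *: 'X_[mnm_pow i (2 * d)] : P).
Proof.
move=> d0 hdeg c0 a0 hpow.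
have hV : forall i : 'I_n, mnm_pow i (2 * d) = (mnm_pow i d + mnm_pow i d)%MM.
  by move=> i; apply/mnmP => j; rewrite mnmDE !mnmE; case: eqP => // _; lia.
have sumA : forall w : 'I_n -> R, (forall i, 0 <= w i) ->
    SOBS (\sum_i w i *: 'X_[mnm_pow i (2 * d)] : P).
  by move=> w w0; apply: SOBS_sum => i _; rewrite hV; apply: SOBS_sqmono.
have [hA|hA] := boolP ((0 < c) && [forall i, ~~ odd (al i)]).
  case/andP: hA => cp /forallP ev.
  pose h := [multinom (al i)./2 | i < n].
  have -> : al = (h + h)%MM.
    apply/mnmP => i; rewrite mnmDE mnmE addnn.
    by move: (odd_double_half (al i)); rewrite (negbTE (ev i)) add0n.
  by apply: SOBSD; [apply: SOBS_sqmono; exact: ltW | apply: sumA].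
have [s [s2 sc]] : exists s : 'I_n -> R,
    (forall i, s i ^+ 2 = 1) /\ c * \prod_i s i ^+ al i = - `|c|.
  have [cn|cp] := ltrP c 0.
    exists (fun _ => 1); split=> [i|]; first by rewrite expr1n.
    by rewrite big1 ?mulr1 ?ltr0_norm ?opprK // => i _; rewrite expr1n.
  have cp' : 0 < c by rewrite lt_def c0.
  have [k ok] : exists k, odd (al k).
    by move: hA; rewrite cp' /= negb_forall => /existsP [k]; rewrite negbK; exists k.
  exists (fun i => if i == k then -1 else 1); split=> [i|].
    by case: eqP; rewrite ?sqrrN expr1n.
  rewrite (bigD1 k) //= eqxx big1 ?mulr1 => [|i /negbTE ->]; last by rewrite expr1n.
  by rewrite -signr_odd ok expr1 gtr0_norm // mulrN1.
have nc0 : `|c| != 0 by rewrite normr_eq0.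
have d20 : ((2 * d)%:R : R) != 0 by rewrite pnatr_eq0 muln_eq0 /= -lt0n d0.
pose q i := if al i == 0%N then 1 else (2 * d)%:R * a i / ((al i)%:R * `|c|).
have q0 : forall i, 0 <= q i.
  move=> i; rewrite /q; case: eqP => // _.
  by rewrite divr_ge0 ?mulr_ge0 ?ler0n ?normr_ge0.
have hk : (0 < 2 * d)%N by lia.
have [r hr] := fin_all_exists (fun i => rootex (q0 i) hk).
have hq : forall i, q i ^+ al i * ((al i)%:R ^+ al i * `|c| ^+ al i) =
                    (2 * d)%:R ^+ al i * a i ^+ al i.
  move=> i; rewrite /q; case: eqP => [->|ne]; first by rewrite !expr0 !mul1r.
  rewrite -!exprMn; congr (_ ^+ _); rewrite divfK //.
  by rewrite mulf_neq0 // pnatr_eq0; apply/eqP.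
have hsum : (\sum_i al i)%N = (2 * d)%N by rewrite -mdegE.
have hprod : (\prod_i q i ^+ al i) * (mnm_selfpow R al * `|c| ^+ (2 * d)) =
             (2 * d)%:R ^+ (2 * d) * vpow a al.
  have e1 : \prod_i (2 * d)%:R ^+ al i = (2 * d)%:R ^+ (2 * d) :> R by rewrite prodrXr hsum.
  have e2 : \prod_i `|c| ^+ al i = `|c| ^+ (2 * d) by rewrite prodrXr hsum.
  rewrite /mnm_selfpow /vpow -e1 -e2 -!big_split /=.
  by apply: eq_bigr => i _; rewrite hq.
have sp0 : mnm_selfpow R al != 0.
  rewrite /mnm_selfpow; apply/prodf_neq0 => i _.
  by case: (posnP (al i)) => [->|p]; rewrite ?expr0 ?oner_eq0 // expf_neq0 // pnatr_eq0 -lt0n.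
have hc2 : `|c| ^+ (2 * d) = c ^+ (2 * d) by rewrite !exprM real_normK // num_real.
have hq1 : \prod_i q i ^+ al i = 1.
  apply: (mulIf (mulf_neq0 sp0 (expf_neq0 (2 * d) nc0))); rewrite /= hprod hpow mul1r hc2 mulrC //.
have hr1 : \prod_i r i ^+ al i = 1.
  apply/eqP; rewrite -(@pexpr_eq1 _ _ (2 * d)); last by apply: prodr_ge0 => i _; rewrite exprn_ge0 // (hr i).1.
    rewrite -prodrXl; apply/eqP; rewrite -[RHS]hq1; apply: eq_bigr => i _; by rewrite exprAC (hr i).2.
  lia.
pose Y i := (s i * r i) *: ('X_i : P).
have tY : forall i, term (Y i) by move=> i; apply: termZ; apply: termX.
have L := @L4 Y (fun i => al i) d tY hsum.
have hY2 : forall i, Y i ^+ (2 * d) = q i *: 'X_[mnm_pow i (2 * d)].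
  by move=> i; rewrite exprZn exprMn (hr i).2 exprM s2 expr1n mul1r mnm_powE.
have hYp : \prod_i Y i ^+ al i = (\prod_i s i ^+ al i) *: 'X_[al].
  rewrite /Y; under eq_bigr do rewrite exprZn; rewrite scaler_prod.
  under eq_bigr do rewrite exprMn.
  by rewrite big_split /= hr1 mulr1 -mpolyXE_id.
have hS : \sum_i Y i ^+ (2 * d) *+ al i = \sum_i (q i *: 'X_[mnm_pow i (2 * d)]) *+ al i.
  by apply: eq_bigr => i _; rewrite hY2.
move: L; rewrite hYp hS => L.
set sg := \prod_i s i ^+ al i in sc L.
have sg2 : sg ^+ 2 = 1.
  by rewrite /sg -prodrXl; apply: big1 => i _; rewrite exprAC s2 expr1n.
pose k := `|c| / (2 * d)%:R.
have k0 : 0 <= k by rewrite divr_ge0 ?normr_ge0 ?ler0n.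
have E1 : \sum_i a i *: 'X_[mnm_pow i (2 * d)] =
   \sum_i k *: ((q i *: 'X_[mnm_pow i (2 * d)]) *+ al i) +
   \sum_i (if al i == 0%N then a i else 0) *: 'X_[mnm_pow i (2 * d)].
  rewrite -big_split; apply: eq_bigr => i _ /=; rewrite scalerMnl scalerA -scalerDl.
  congr (_ *: _); rewrite /q; case: eqP => [->|ne]; first by rewrite mulr0n mulr0 add0r.
  have al0 : ((al i)%:R : R) != 0 by rewrite pnatr_eq0; apply/eqP.
  by rewrite addr0 -mulr_natr /k; field; rewrite nc0 al0 pnatr_eq0 -lt0n d0.
have hc : c = - (`|c| * sg) by rewrite -mulNr -sc -mulrA -expr2 sg2 mulr1.
have E2 : c *: ('X_[al] : P) = - (k *: ((sg *: 'X_[al]) *+ (2 * d))).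
  rewrite scalerMnl scalerA -scaleNr; congr (_ *: _).
  by rewrite {1}hc -mulr_natr /k; field; rewrite pnatr_eq0 -lt0n d0.
have -> : c *: 'X_[al] + \sum_i a i *: 'X_[mnm_pow i (2 * d)] =
   k *: (\sum_i (q i *: 'X_[mnm_pow i (2 * d)]) *+ al i - (sg *: 'X_[al]) *+ (2 * d)) +
   \sum_i (if al i == 0%N then a i else 0) *: 'X_[mnm_pow i (2 * d)].
  by rewrite E1 E2 scalerBr scaler_sumr; ring.
apply: SOBSD; first exact: SOBSZ.
by apply: sumA => i; case: eqP.
Qed.
End S.

Theorem theorem2p3 (R : realType) (n d : nat) (f : {mpoly R[n]})
  (a : 'X_{1..n} -> 'I_n -> R) :
  (0 < n)%N ->
  f \is (2 * d)%N.-homog ->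
  (forall alpha, alpha \in Delta f d -> forall i, 0 <= a alpha i) ->
  (forall alpha, alpha \in Delta f d ->
     ((2 * d)%:R ^+ (2 * d) * vpow (a alpha) alpha
      = f@_alpha ^+ (2 * d) * mnm_selfpow R alpha)) ->
  (forall i : 'I_n, \sum_(alpha <- Delta f d) a alpha i <= f@_(mnm_pow i (2 * d))) ->
  SOBS f.
Proof.
move=> n0 hom ha hpow hsum.
have inD : forall al, al \in Delta f d ->
    [/\ al \in msupp f, f@_al != 0, mdeg al = (2 * d)%N & forall i : 'I_n, al != mnm_pow i (2 * d)].
  move=> al; rewrite mem_filter => /andP [/andP [om _] ms].
  move: om; rewrite /in_Omega => /and3P [fa _ /forallP hv]; split=> //.
  exact: (dhomog_mf hom).
have [d0|dpos] := posnP d.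
  pose i0 : 'I_n := Ordinal n0.
  have D0 : Delta f d = [::].
    apply/eqP; rewrite -size_eq0 -leqn0 leqNgt; apply/negP; case: (Delta f d) (inD) => // al s /(_ al).
    rewrite inE eqxx => /(_ isT) [_ _ ]; rewrite d0 muln0 => /eqP; rewrite mdeg_eq0 => /eqP -> /(_ i0).
    have -> : mnm_pow i0 (2 * 0) = 0%MM by apply/mnmP => j; rewrite mnmE !mnm0E; case: eqP.
    by rewrite eqxx.
  have h0 : mnm_pow i0 (2 * d) = 0%MM by apply/mnmP => j; rewrite d0 mnmE !mnm0E; case: eqP.
  have := hsum i0; rewrite D0 big_nil h0 => f0.
  have -> : f = f@_0%MM *: 'X_[0%MM + 0%MM].
    apply/mpolyP => m; rewrite mcoeffZ mcoeffX addm0.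
    have [<-|ne] := eqVneq 0%MM m; first by rewrite mulr1.
    rewrite mulr0; apply: (dhomog_nemf_coeff hom); rewrite d0 muln0 mdeg_eq0 eq_sym //.
  exact: SOBS_sqmono.
set D := Delta f d.
pose v (i : 'I_n) := mnm_pow i (2 * d).
have hV : forall i : 'I_n, v i = (mnm_pow i d + mnm_pow i d)%MM.
  by move=> i; apply/mnmP => j; rewrite mnmDE !mnmE; case: eqP => // _; lia.
have vinj : forall i j, (v i == v j) = (i == j).
  move=> i j; apply/eqP/eqP => [/mnmP /(_ i)|->] //.
  by rewrite !mnmE eqxx; case: eqP => // _; lia.
have f0 : f@_0%MM = 0.
  apply: (dhomog_nemf_coeff hom); have e := @mdeg0 n; rewrite /= e; lia.
pose H al := f@_al *: 'X_[al] + \sum_i a al i *: 'X_[v i].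
pose L := \sum_i (f@_(v i) - \sum_(al <- D) a al i) *: 'X_[v i].
pose g := f - \sum_(al <- D) H al - L.
have -> : f = g + \sum_(al <- D) H al + L by rewrite /g; ring.
have sH : SOBS (\sum_(al <- D) H al).
  rewrite big_seq; apply: SOBS_sum => al alD.
  have [_ fa da _] := inD _ alD.
  by apply: LK => //; [exact: ha | exact: hpow].
have sL : SOBS L.
  apply: SOBS_sum => i _; rewrite [X in 'X_[X]]hV; apply: SOBS_sqmono.
  by rewrite subr_ge0; exact: (hsum i).
apply: SOBSD; last exact: sL.
apply: SOBSD; last exact: sH.
have uD : uniq D by apply: filter_uniq; exact: msupp_uniq.
have F1 : forall be, \sum_(al <- D) f@_al * (al == be)%:R = if be \in D then f@_be else 0.
  move=> be.
  have -> : \sum_(al <- D) f@_al * (al == be)%:R = \sum_(al <- D | al == be) f@_al.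
    by rewrite [RHS]big_mkcond; apply: eq_bigr => al _; case: eqP; rewrite ?mulr1 ?mulr0.
  case: ifP => bD; first by rewrite -big_filter (filter_pred1_uniq uD bD) big_seq1.
  rewrite big_seq_cond big1 // => al /andP [alD /eqP e].
  by move: bD; rewrite -e alD.
have F2a : forall (w : 'I_n -> R) be, (forall i, v i != be) ->
    \sum_i w i * (v i == be)%:R = 0.
  by move=> w be hb; apply: big1 => i _; rewrite (negbTE (hb i)) mulr0.
have F2b : forall (w : 'I_n -> R) k, \sum_i w i * (v i == v k)%:R = w k.
  move=> w k; rewrite (bigD1 k) //= eqxx mulr1 big1 ?addr0 // => i ik.
  by rewrite vinj (negbTE ik) mulr0.
have cg : forall be, g@_be = f@_be
     - \sum_(al <- D) (f@_al * (al == be)%:R + \sum_i a al i * (v i == be)%:R)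
     - \sum_i (f@_(v i) - \sum_(al <- D) a al i) * (v i == be)%:R.
  move=> be; rewrite /g /L !mcoeffB !raddf_sum /=; congr (_ + _ + _).
    apply: eq_bigr => al _; congr (- _); rewrite /H mcoeffD (mcoeffZ (f@_al)) mcoeffX raddf_sum.
    by congr (_ + _); apply: eq_bigr => i _ /=; rewrite (mcoeffZ (a al i)) mcoeffX.
  by apply: eq_bigr => i _ /=; rewrite (mcoeffZ (f@_(v i) - _)) mcoeffX.
have notv : forall al, al \in D -> forall k, v k != al.
  by move=> al alD k; have [_ _ _ h] := inD _ alD; rewrite eq_sym; exact: h.
have nD : forall be, be \in D -> g@_be = 0.
  move=> be bD; rewrite cg big_split /= F1 bD.
  rewrite (F2a _ _ (notv _ bD)) subr0.
  rewrite big_seq big1 ?addr0 ?subrr // => al _; exact: F2a _ _ (notv _ bD).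
have nV : forall k, g@_(v k) = 0.
  move=> k; rewrite cg big_split /= F1 F2b.
  have -> : (v k \in D) = false by apply/negP => /notv /(_ k); rewrite eqxx.
  rewrite add0r.
  have -> : \sum_(al <- D) \sum_i a al i * (v i == v k)%:R = \sum_(al <- D) a al k.
    by apply: eq_bigr => al _; rewrite F2b.
  by rewrite subrr.
rewrite (mpolyE g) big_seq; apply: SOBS_sum => be; rewrite mcoeff_msupp => gbe.
have beD : be \notin D by apply/negP => /nD; apply/eqP.
have bev : forall k, v k != be by move=> k; apply/eqP => e; move: gbe; rewrite -e nV eqxx.
have gf : g@_be = f@_be.
  rewrite cg big_split /= F1 (negbTE beD) add0r (F2a _ _ bev) subr0.
  by rewrite big1 ?subr0 // => al _; exact: F2a.
have fbe : f@_be != 0 by rewrite -gf.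
have be0 : be != 0%MM by apply/eqP => e; move: fbe; rewrite e f0 eqxx.
have om : in_Omega f d be.
  rewrite /in_Omega fbe be0 /=; apply/forallP => i; rewrite eq_sym; exact: bev.
move: beD; rewrite mem_filter om /= mcoeff_msupp fbe andbT negb_or => /andP [fn /existsPn ev].
pose h := [multinom (be i)./2 | i < n].
have ebe : be = (h + h)%MM.
  apply/mnmP => i; rewrite mnmDE mnmE addnn.
  by move: (odd_double_half (be i)); rewrite (negbTE (ev i)) add0n.
by rewrite [X in 'X_[X]]ebe; apply: SOBS_sqmono; rewrite gf leNgt.
Qed.
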